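(* For every $d$-dimensional state $\rho$ and every maximally coherent state $|\Psi_d\rangle=d^{-1/2}\sum_{j=1}^de^{i\theta_j}|j\rangle$ ($\theta_j\in\mathbb R$), \[ \mu_d(\rho)\ge\log d+\log\langle\Psi_d|\rho|\Psi_d\rangle . \]
   Context: Fixed computational basis; $\Delta$ the dephasing map (deleting off-diagonal entries); logs base 2. $R^\rho=\Delta(\rho)^{-1/2}\rho\Delta(\rho)^{-1/2}$ (inverse on the support) and $\mu_k(\rho)=\max_{I\subseteq[d],|I|\le k}\log\|\Pi_IR^\rho\Pi_I\|_\infty$ with $\Pi_I=\sum_{i\in I}|i\rangle\langle i|$; in particular $\mu_d(\rho)=\log\|R^\rho\|_\infty$. *)

(* Defs.v *)
From HB Require Import structures.
From mathcomp Require Import all_boot all_order all_algebra.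
From mathcomp Require Import complex.
From mathcomp Require Import all_classical all_reals.
From mathcomp Require Import exp trigo.
Set Implicit Arguments. Unset Strict Implicit. Unset Printing Implicit Defensive.
Import Order.TTheory GRing.Theory Num.Theory.
Local Open Scope ring_scope.
Local Open Scope classical_set_scope.

Section QDefs.
Variable R : realType.
Local Notation C := R[i].

Definition adj {m n : nat} (A : 'M[C]_(m, n)) : 'M[C]_(n, m) :=
  (map_mx (fun z : C => (complex.Re z -i* complex.Im z)%C) A)^T.

Definition is_state {d : nat} (rho : 'M[C]_d) : Prop :=
  adj rho = rho /\
  (forall v : 'cV[C]_d, 0 <= complex.Re ((adj v *m rho *m v) 0 0) /\
                        complex.Im ((adj v *m rho *m v) 0 0) = 0) /\
  \tr rho = 1.

Definition dephase {d : nat} (rho : 'M[C]_d) : 'M[C]_d :=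
  diag_mx (\row_i rho i i).

(* Delta(rho)^{-1/2}, inverse taken on the support *)
Definition dephase_invsqrt {d : nat} (rho : 'M[C]_d) : 'M[C]_d :=
  diag_mx (\row_i (let r := complex.Re (dephase rho i i) in
                    if 0 < r then ((Num.sqrt r)^-1)%:C%C else 0)).

Definition Rmat {d : nat} (rho : 'M[C]_d) : 'M[C]_d :=
  dephase_invsqrt rho *m rho *m dephase_invsqrt rho.

Definition vnorm {d : nat} (v : 'cV[C]_d) : R :=
  Num.sqrt (\sum_i (complex.Re (v i 0) ^+ 2 + complex.Im (v i 0) ^+ 2)).

Definition opnorm {d : nat} (A : 'M[C]_d) : R :=
  sup [set r : R | exists v : 'cV[C]_d, vnorm v = 1 /\ r = vnorm (A *m v)].

Definition log2 (x : R) : R := ln x / ln 2.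

Definition Pi_mx {d : nat} (I : {set 'I_d}) : 'M[C]_d :=
  diag_mx (\row_i (if i \in I then 1 else 0)).

Definition mu_k {d : nat} (k : nat) (rho : 'M[C]_d) : R :=
  \big[Num.max/log2 (opnorm (Pi_mx (@finset.set0 _) *m Rmat rho *m Pi_mx (@finset.set0 _)))]_(I : {set 'I_d} | (#|I| <= k)%N)
     log2 (opnorm (Pi_mx I *m Rmat rho *m Pi_mx I)).

Definition max_coh {d : nat} (theta : 'I_d -> R) : 'cV[C]_d :=
  \col_j (((Num.sqrt (d%:R))^-1 * cos (theta j)) +i* ((Num.sqrt (d%:R))^-1 * sin (theta j)))%C.

(* <psi| rho |psi> (real part; it is real for Hermitian rho) *)
Definition expect {d : nat} (psi : 'cV[C]_d) (rho : 'M[C]_d) : R :=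
  complex.Re ((adj psi *m rho *m psi) 0 0).

End QDefs.

(* Main.v *)
Require Import Defs.
From HB Require Import structures.
From mathcomp Require Import all_boot all_order all_algebra.
From mathcomp Require Import complex.
From mathcomp Require Import all_classical all_reals.
From mathcomp Require Import exp trigo.
From mathcomp Require Import ring lra.
Import Order.TTheory GRing.Theory Num.Theory.
Local Open Scope ring_scope.

Section S.
Variable R : realType.
Local Notation C := R[i].

Definition n2 (z : C) : R := complex.Re z ^+ 2 + complex.Im z ^+ 2.

Lemma n2_ge0 z : 0 <= n2 z.
Proof. by rewrite /n2 addr_ge0 // sqr_ge0. Qed.

Lemma ReD (x y : C) : complex.Re (x + y) = complex.Re x + complex.Re y.
Proof. by case: x; case: y. Qed.
Lemma ImD (x y : C) : complex.Im (x + y) = complex.Im x + complex.Im y.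
Proof. by case: x; case: y. Qed.

Lemma Re_sum (I : Type) (r : seq I) (P : pred I) (F : I -> C) :
  complex.Re (\sum_(i <- r | P i) F i) = \sum_(i <- r | P i) complex.Re (F i).
Proof. exact: (big_morph _ ReD). Qed.
Lemma Im_sum (I : Type) (r : seq I) (P : pred I) (F : I -> C) :
  complex.Im (\sum_(i <- r | P i) F i) = \sum_(i <- r | P i) complex.Im (F i).
Proof. exact: (big_morph _ ImD). Qed.

Lemma ReM (x y : C) : complex.Re (x * y) = complex.Re x * complex.Re y - complex.Im x * complex.Im y.
Proof. by case: x; case: y. Qed.
Lemma ImM (x y : C) : complex.Im (x * y) = complex.Re x * complex.Im y + complex.Im x * complex.Re y.
Proof. case: x; case: y => /= *; ring. Qed.

Lemma adjE m n (A : 'M[C]_(m, n)) i j : adj A i j = conjc (A j i).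
Proof. by rewrite /adj !mxE; case: (A j i). Qed.

Lemma quadE d (A : 'M[C]_d) (v : 'cV[C]_d) :
  (adj v *m A *m v) 0 0 = \sum_l \sum_k conjc (v k 0) * A k l * v l 0.
Proof.
rewrite mxE; apply: eq_bigr => l _; rewrite mxE mulr_suml; apply: eq_bigr => k _.
by rewrite adjE.
Qed.

Lemma ReJ (z : C) : complex.Re (conjc z) = complex.Re z. Proof. by case: z. Qed.
Lemma ImJ (z : C) : complex.Im (conjc z) = - complex.Im z. Proof. by case: z. Qed.

Lemma quad_delta d (A : 'M[C]_d) k l :
  (adj (delta_mx k 0 : 'cV[C]_d) *m A *m (delta_mx l 0 : 'cV[C]_d)) 0 0 = A k l.
Proof.
have -> : adj (delta_mx k 0 : 'cV[C]_d) = delta_mx 0 k.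
  apply/matrixP => i j; rewrite adjE !mxE.
  by case: (j == k); case: (i == 0); rewrite /= ?conjc0 ?conjc1 /=; apply/eqP; rewrite eq_complex /= ?oppr0 ?eqxx.
by rewrite -rowE -colE !mxE.
Qed.

Lemma mxD m n (A B : 'M[C]_(m, n)) i j : (A + B) i j = A i j + B i j.
Proof. by rewrite mxE. Qed.
Lemma mxZ m n a (A : 'M[C]_(m, n)) i j : (a *: A) i j = a * A i j.
Proof. by rewrite mxE. Qed.

Lemma adjD m n (A B : 'M[C]_(m, n)) : adj (A + B) = adj A + adj B.
Proof. apply/matrixP => i j; rewrite !mxE; case: (A j i); case: (B j i) => *; apply/eqP; by rewrite eq_complex /= opprD !eqxx. Qed.
Lemma adjZ m n c (A : 'M[C]_(m, n)) : adj (c *: A) = conjc c *: adj A.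
Proof. apply/matrixP => i j; rewrite !mxE; case: (A j i); case: c => *; apply/eqP; rewrite eq_complex /=; apply/andP; split; apply/eqP; ring. Qed.

Lemma herm_entry {d} {rho : 'M[C]_d} : is_state rho -> forall i j, rho j i = conjc (rho i j).
Proof. by case=> H _ i j; rewrite -{1}H adjE. Qed.

Lemma psd_diag {d} {rho : 'M[C]_d} : is_state rho -> forall i,
  0 <= complex.Re (rho i i) /\ complex.Im (rho i i) = 0.
Proof. by case=> _ [H _] i; have := H (delta_mx i 0); rewrite quad_delta. Qed.

Lemma psd_zero {d} {rho : 'M[C]_d} : is_state rho -> forall i,
  complex.Re (rho i i) = 0 -> forall j, rho i j = 0.
Proof.
move=> st i Hi j.
have [Hii Iii] := psd_diag st i.
case: (eqVneq i j) => [<-|ij].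
  by move: Hi Iii; case: (rho i i) => a b /= -> ->.
have rii : rho i i = 0 by move: Hi Iii; case: (rho i i) => a b /= -> ->.
have [Hjj Ijj] := psd_diag st j.
have key : forall c : C, 0 <= complex.Re (conjc c * rho i j + c * rho j i + rho j j).
  move=> c; case: st => H1 [H2 H3]; have [H _] := H2 (c *: delta_mx i 0 + delta_mx j 0).
  move: H; rewrite adjD adjZ !mulmxDl !mulmxDr -!scalemxAl -!scalemxAr !mxD !mxZ !quad_delta.
  by rewrite rii mulr0 mulr0 add0r addrA.
rewrite (herm_entry st i j) in key.
move: key Hjj; case: (rho i j) => a b key Hjj.
have H2 : forall x y : R, 0 <= 2 * (x * a + y * b) + complex.Re (rho j j).
  move=> x y; have := key (x +i* y)%C; rewrite /= ReD /=.
  by congr (0 <= _); ring.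
have : a ^+ 2 + b ^+ 2 = 0.
  apply/eqP; rewrite eq_le addr_ge0 ?sqr_ge0 // andbT; rewrite leNgt; apply/negP => Hp.
  set r := complex.Re (rho j j) in H2 Hjj.
  have := H2 (- ((r + 1) / (a ^+ 2 + b ^+ 2)) * a) (- ((r + 1) / (a ^+ 2 + b ^+ 2)) * b).
  have -> : 2 * (- ((r + 1) / (a ^+ 2 + b ^+ 2)) * a * a + - ((r + 1) / (a ^+ 2 + b ^+ 2)) * b * b) + r
     = - r - 2.
    field; exact: lt0r_neq0.
  lra.
move=> /eqP; rewrite paddr_eq0 ?sqr_ge0 // !sqrf_eq0 => /andP[/eqP -> /eqP ->].
by [].
Qed.

Definition rr {d} (rho : 'M[C]_d) k : R := complex.Re (rho k k).
Definition Dg {d} (rho : 'M[C]_d) k : C :=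
  if 0 < rr rho k then ((Num.sqrt (rr rho k))^-1)%:C%C else 0.

Lemma Rmat_entry d (rho : 'M[C]_d) k l : Rmat rho k l = Dg rho k * rho k l * Dg rho l.
Proof.
rewrite /Rmat /dephase_invsqrt mul_diag_mx mul_mx_diag !mxE /Dg /rr /dephase.
by rewrite !eqxx !mulr1n.
Qed.

Lemma rho_fact {d} {rho : 'M[C]_d} : is_state rho -> forall k l,
  rho k l = (Num.sqrt (rr rho k))%:C%C * Rmat rho k l * (Num.sqrt (rr rho l))%:C%C.
Proof.
move=> st k l; rewrite Rmat_entry /Dg.
have [rk _] := psd_diag st k; have [rl _] := psd_diag st l.
case: ltrP => hk; last first.
  have e : rr rho k = 0 by apply/eqP; rewrite eq_le hk rk.
  by rewrite (psd_zero st k e) e sqrtr0 !mul0r.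
case: ltrP => hl; last first.
  have e : rr rho l = 0 by apply/eqP; rewrite eq_le hl rl.
  by rewrite (herm_entry st l k) (psd_zero st l e) e sqrtr0 conjc0 !mulr0.
have sk : (Num.sqrt (rr rho k))%:C%C * ((Num.sqrt (rr rho k))^-1)%:C%C = 1 :> C.
  by rewrite -rmorphM divff // sqrtr_eq0 -ltNge.
have sl : ((Num.sqrt (rr rho l))^-1)%:C%C * (Num.sqrt (rr rho l))%:C%C = 1 :> C.
  by rewrite -rmorphM mulVf // sqrtr_eq0 -ltNge.
by rewrite !mulrA sk mul1r -mulrA sl mulr1.
Qed.


Definition nm (z : C) : R := Num.sqrt (n2 z).
Lemma nmE z : nm z = ComplexField.Normc.normc z. Proof. by case: z. Qed.
Lemma nm_ge0 z : 0 <= nm z. Proof. exact: sqrtr_ge0. Qed.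
Lemma nmD x y : nm (x + y) <= nm x + nm y. Proof. rewrite !nmE; exact: le_normcD. Qed.
Lemma nmM x y : nm (x * y) = nm x * nm y. Proof. rewrite !nmE; exact: ComplexField.Normc.normcM. Qed.
Lemma n2_nm z : n2 z = nm z ^+ 2. Proof. by rewrite sqr_sqrtr // n2_ge0. Qed.

Lemma nm_sum (I : Type) (r : seq I) (F : I -> C) :
  nm (\sum_(i <- r) F i) <= \sum_(i <- r) nm (F i).
Proof.
elim: r => [|a r IH]; first by rewrite !big_nil /nm /n2 /= expr0n /= addr0 sqrtr0.
rewrite !big_cons; apply: le_trans (nmD _ _) _; exact: lerD.
Qed.

Lemma vnorm1 {d} {v : 'cV[C]_d} : vnorm v = 1 -> \sum_i n2 (v i 0) = 1.
Proof.
move=> h; have e : Num.sqrt (\sum_i n2 (v i 0)) = 1 by exact: h.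
by rewrite -(sqr_sqrtr (sumr_ge0 _ (fun i _ => n2_ge0 (v i 0)))) e expr1n.
Qed.

Lemma bounded d (A : 'M[C]_d) :
  exists M, forall v : 'cV[C]_d, vnorm v = 1 -> vnorm (A *m v) <= M.
Proof.
exists (Num.sqrt (\sum_i (\sum_j nm (A i j)) ^+ 2)) => v hv.
have hs := vnorm1 hv.
have vj : forall j, nm (v j 0) <= 1.
  move=> j; rewrite /nm -sqrtr1 ler_sqrt // -hs (bigD1 j) //= lerDl.
  exact: sumr_ge0 (fun i _ => n2_ge0 _).
rewrite /vnorm ler_sqrt; last by apply: sumr_ge0 => i _; exact: sqr_ge0.
apply: ler_sum => i _; rewrite -/(n2 _) n2_nm.
have h1 : nm ((A *m v) i 0) <= \sum_j nm (A i j).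
  rewrite mxE; apply: le_trans (nm_sum _ _ _) _; apply: ler_sum => j _.
  rewrite nmM -{2}(mulr1 (nm (A i j))); apply: ler_wpM2l; [exact: nm_ge0 | exact: vj].
rewrite !expr2; apply: ler_pM => //; exact: nm_ge0.
Qed.

Lemma cs d (u x : 'cV[C]_d) : \sum_i n2 (u i 0) = 1 ->
  complex.Re (\sum_i conjc (u i 0) * x i 0) <= vnorm x.
Proof.
move=> hu; rewrite Re_sum; set s := \sum_i _.
have [s0|s0] := lerP s 0; first by apply: le_trans s0 _; exact: sqrtr_ge0.
have key : \sum_i ((s * complex.Re (conjc (u i 0) * x i 0)) *+ 2) <=
      \sum_i (s ^+ 2 * n2 (u i 0) + n2 (x i 0)).
  apply: ler_sum => i _; rewrite ReM ReJ ImJ /n2.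
  move: (u i 0) (x i 0) => [a b] [c e] /=.
  have := sqr_ge0 (s * a - c); have := sqr_ge0 (s * b - e); rewrite mulr2n; nra.
rewrite sumrMnl -mulr_sumr -/s big_split /= -mulr_sumr hu mulr1 in key.
rewrite /vnorm -(ger0_norm (ltW s0)) -sqrtr_sqr ler_sqrt; last first.
  exact: sumr_ge0 (fun i _ => n2_ge0 _).
rewrite -/(n2 _) ; move: key; set N := \sum_i _; nra.
Qed.


Lemma le_bigmax_any (I : finType) (P : pred I) (F : I -> R) x0 i0 :
  P i0 -> F i0 <= \big[Num.max/x0]_(i | P i) F i.
Proof.
move=> Pi; rewrite unlock /reducebig.
have : i0 \in index_enum I by rewrite mem_index_enum.
elim: (index_enum I) => //= a r IH; rewrite inE => /orP[/eqP <-|/IH h].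
  by rewrite Pi le_max lexx.
by case: (P a) => //; rewrite le_max h orbT.
Qed.

Lemma Pi_setT d : @Pi_mx R d finset.setT = 1%:M.
Proof. by apply/matrixP => i j; rewrite !mxE finset.in_setT. Qed.

Lemma log2_le (x y : R) : 0 < x -> x <= y -> log2 x <= log2 y.
Proof.
move=> x0 xy; rewrite /log2 ler_pM2r ?invr_gt0 ?ln_gt0 ?ltr1n //.
by rewrite ler_ln // posrE (lt_le_trans x0 xy).
Qed.

Lemma log2M (x y : R) : 0 < x -> 0 < y -> log2 (x * y) = log2 x + log2 y.
Proof. by move=> x0 y0; rewrite /log2 lnM // mulrDl. Qed.


Lemma cjM (x y : C) : conjc (x * y) = conjc x * conjc y.
Proof. exact: rmorphM. Qed.
Lemma cjR (r : R) : conjc (r%:C)%C = (r%:C)%C.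
Proof. exact: conjc_real. Qed.

Lemma main_aux d (rho : 'M[C]_d) (theta : 'I_d -> R) :
  is_state rho ->
  0 < expect (max_coh theta) rho ->
  mu_k d rho >= log2 (d%:R) + log2 (expect (max_coh theta) rho).
Proof.
move=> st he.
have d0 : (0 < d)%N.
  case: (posnP d) => // dz; exfalso; case: st => _ [_ ht]; move: ht.
  rewrite /mxtrace big1 => [/eqP|i _]; first by rewrite eq_sym oner_eq0.
  by have := ltn_ord i; rewrite {2}dz.
have dR : 0 < d%:R :> R by rewrite ltr0n.
set e := expect _ _ in he *.
set Rm := Rmat rho.
pose s k := Num.sqrt (rr rho k).
pose z k := (cos (theta k) +i* sin (theta k))%C.
pose u : 'cV[C]_d := \col_k ((s k)%:C%C * z k).
pose a := (Num.sqrt (d%:R : R))^-1.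
have F1 : \sum_i n2 (u i 0) = 1.
  have -> : \sum_i n2 (u i 0) = \sum_i rr rho i.
    apply: eq_bigr => k _; rewrite mxE /n2 /=.
    have [rk _] := psd_diag st k.
    transitivity (s k ^+ 2 * (cos (theta k) ^+ 2 + sin (theta k) ^+ 2)); first by ring.
    by rewrite cos2Dsin2 mulr1 sqr_sqrtr.
  case: st => _ [_ ht]; rewrite /rr -Re_sum; move: ht; rewrite /mxtrace => ->; by [].
have uE : forall k, u k 0 = (s k)%:C%C * z k by move=> k; rewrite mxE.
have psiE : forall k, max_coh theta k 0 = a%:C%C * z k.
  move=> k; rewrite mxE /z; apply/eqP; rewrite eq_complex /= !mul0r subr0 addr0 !eqxx //.
have F2 : e * d%:R = complex.Re (\sum_k conjc (u k 0) * (Rm *m u) k 0).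
  have eq1 : (adj (max_coh theta) *m rho *m max_coh theta) 0 0 =
       (a%:C%C * a%:C%C) * \sum_k conjc (u k 0) * (Rm *m u) k 0.
    rewrite quadE exchange_big mulr_sumr; apply: eq_bigr => k _.
    rewrite [X in _ = _ * (_ * X)]mxE !mulr_sumr; apply: eq_bigr => l _.
    rewrite (rho_fact st k l) !psiE !uE -/Rm -/(s k) -/(s l) !cjM !cjR; ring.
  rewrite /e /expect eq1 ReM /= !mul0r !mulr0 ?subr0 ?addr0 ?subr0 ?mul0r ?subr0.
  have aa : a * a * d%:R = 1.
    rewrite /a -expr2 exprVn sqr_sqrtr ?ler0n // mulVf //; exact: lt0r_neq0.
  by rewrite mulrAC aa mul1r.
have B : exists M, forall v : 'cV[C]_d, vnorm v = 1 -> vnorm (Rm *m v) <= M := bounded d Rm.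
have hu : vnorm u = 1 by rewrite -[RHS]sqrtr1 -F1.
have F3 : e * d%:R <= opnorm Rm.
  rewrite F2; apply: le_trans (cs _ _ (Rm *m u) F1) _.
  apply: ub_le_sup; last by exists u.
  case: B => M hM; exists M => r [v [hv ->]]; exact: hM.
have Pe : 0 < e * d%:R by rewrite mulr_gt0.
rewrite -log2M // mulrC.
apply: le_trans (log2_le _ _ Pe F3) _.
have -> : Rm = @Pi_mx R d finset.setT *m Rm *m @Pi_mx R d finset.setT by rewrite Pi_setT mul1mx mulmx1.
rewrite /mu_k /Rm; apply: (@le_bigmax_any _ _ (fun I => log2 (opnorm (Pi_mx R I *m Rmat rho *m Pi_mx R I))) _ finset.setT).
by rewrite /= finset.cardsT card_ord.
Qed.

End S.

Theorem lemma4 (R : realType) (d : nat) (rho : 'M[R[i]]_d) (theta : 'I_d -> R) :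
  is_state rho ->
  0 < expect (max_coh theta) rho ->
  mu_k d rho >= log2 (d%:R) + log2 (expect (max_coh theta) rho).
Proof. exact: main_aux. Qed.
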